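(* Every circuit $c$ of $\mathsf{ACirc}$ is equivalent (equal in AIH, equivalently having the same denotation) to a circuit containing precisely one occurrence of $\mathbf 1$ and no occurrence of $\mathbf 1^{op}$.
   Context: Fix a field $k$. Circuits: terms built from generators with sorts $(n,m)$: copier $\Delta:(1,2)$, discard $!:(1,0)$, amplifier $\mathsf{s}_r:(1,1)$ ($r\in k$), register $\mathsf{x}:(1,1)$, adder $+:(2,1)$, zero $0:(0,1)$, one $\mathbf{1}:(0,1)$; mirror images $\Delta^{op}:(2,1)$, $!^{op}:(0,1)$, $\mathsf{s}_r^{op}$, $\mathsf{x}^{op}:(1,1)$, $+^{op}:(1,2)$, $0^{op}:(1,0)$, $\mathbf{1}^{op}:(1,0)$; $\mathrm{id}_0:(0,0),\mathrm{id}_1:(1,1),\mathrm{sw}:(2,2)$; closed under $;$ and $\oplus$; $\mathsf{ACirc}$ is the resulting prop. Denotation over the field $k(x)$ of polynomial fractions: $[\![\Delta]\!]=\{(p,(p,p))\}$, $[\![!]\!]=\{(p,\bullet)\}$, $[\![+]\!]=\{((p,q),p+q)\}$, $[\![0]\!]=\{(\bullet,0)\}$, $[\![\mathbf 1]\!]=\{(\bullet,1)\}$, $[\![\mathsf s_r]\!]=\{(p,rp)\}$, $[\![\mathsf x]\!]=\{(p,px)\}$; mirrored generators denote converse relations; structural ones identity, swap, $\{(\bullet,\bullet)\}$; $;$ relational composition, $\oplus$ product. AIH is the equational theory of Affine Interacting Hopf Algebras, sound and complete for this semantics. *)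

(* Defs.v *)
From HB Require Import structures.
From mathcomp Require Import all_boot all_order all_algebra.
Set Implicit Arguments.
Unset Strict Implicit.
Unset Printing Implicit Defensive.
Import GRing.Theory.
Local Open Scope ring_scope.

Definition kx (k : fieldType) := {fraction {poly k}}.
Definition polyfrac (k : fieldType) (p : {poly k}) : kx k := FracField.tofrac p.
Definition xfrac (k : fieldType) : kx k := polyfrac 'X.
Definition cst (k : fieldType) (r : k) : kx k := polyfrac r%:P.

Inductive gen (k : fieldType) : nat -> nat -> Type :=
| g_copy : gen k 1 2
| g_discard : gen k 1 0
| g_amp : k -> gen k 1 1
| g_reg : gen k 1 1
| g_add : gen k 2 1
| g_zero : gen k 0 1
| g_one : gen k 0 1.

(* Circuits: terms of ACirc. [c_op g] is the mirror image of [g]. *)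
Inductive circ (k : fieldType) : nat -> nat -> Type :=
| c_gen : forall n m, gen k n m -> circ k n m
| c_op : forall n m, gen k n m -> circ k m n
| c_id0 : circ k 0 0
| c_id1 : circ k 1 1
| c_sw : circ k 2 2
| c_seq : forall n m l, circ k n m -> circ k m l -> circ k n l
| c_par : forall n1 m1 n2 m2, circ k n1 m1 -> circ k n2 m2 ->
    circ k (n1 + n2)%N (m1 + m2)%N.

Definition is_one (k : fieldType) n m (g : gen k n m) : bool :=
  match g with g_one => true | _ => false end.

Fixpoint count_one (k : fieldType) n m (c : circ k n m) : nat :=
  match c with
  | c_gen _ _ g => is_one g
  | c_seq _ _ _ c1 c2 => (count_one c1 + count_one c2)%N
  | c_par _ _ _ _ c1 c2 => (count_one c1 + count_one c2)%N
  | _ => 0%N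
  end.

Fixpoint count_one_op (k : fieldType) n m (c : circ k n m) : nat :=
  match c with
  | c_op _ _ g => is_one g
  | c_seq _ _ _ c1 c2 => (count_one_op c1 + count_one_op c2)%N
  | c_par _ _ _ _ c1 c2 => (count_one_op c1 + count_one_op c2)%N
  | _ => 0%N
  end.

Definition rel (k : fieldType) n m := 'rV[kx k]_n -> 'rV[kx k]_m -> Prop.

Definition sem_gen (k : fieldType) n m (g : gen k n m) : rel k n m :=
  match g in gen _ n m return rel k n m with
  | g_copy => fun u v => v ord0 ord0 = u ord0 ord0 /\ v ord0 ord_max = u ord0 ord0
  | g_discard => fun _ _ => True
  | g_amp r => fun u v => v ord0 ord0 = cst r * u ord0 ord0
  | g_reg => fun u v => v ord0 ord0 = u ord0 ord0 * xfrac k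
  | g_add => fun u v => v ord0 ord0 = u ord0 ord0 + u ord0 ord_max
  | g_zero => fun _ v => v ord0 ord0 = 0
  | g_one => fun _ v => v ord0 ord0 = 1
  end.

Fixpoint sem (k : fieldType) n m (c : circ k n m) : rel k n m :=
  match c in circ _ n m return rel k n m with
  | c_gen _ _ g => sem_gen g
  | c_op _ _ g => fun u v => sem_gen g v u
  | c_id0 => fun u v => u = v
  | c_id1 => fun u v => u = v
  | c_sw => fun u v => v ord0 ord0 = u ord0 ord_max /\ v ord0 ord_max = u ord0 ord0
  | c_seq _ _ _ c1 c2 => fun u w => exists v, sem c1 u v /\ sem c2 v w
  | c_par _ _ _ _ c1 c2 => fun u v =>
      sem c1 (lsubmx u) (lsubmx v) /\ sem c2 (rsubmx u) (rsubmx v)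
  end.

(* Main.v *)
Require Import Defs.
From mathcomp Require Import all_boot all_order all_algebra.
From Stdlib Require Import Setoid.
Set Implicit Arguments.
Unset Strict Implicit.
Section S.
Variable k : fieldType.
Fixpoint idc n : circ k n n :=
  match n return circ k n n with 0 => c_id0 k | S n' => c_par (c_id1 k) (idc n') end.
Fixpoint mv (a j : nat) : circ k (1 + (a + j)) (a + (1 + j)) :=
  match a return circ k (1 + (a + j)) (a + (1 + j)) with
  | 0 => idc (1 + j)
  | S a' => c_seq (c_par (c_sw k) (idc (a' + j))) (c_par (c_id1 k) (mv a' j))
  end.
Fixpoint mvb (a j : nat) : circ k (a + (1 + j)) (1 + (a + j)) :=
  match a return circ k (a + (1 + j)) (1 + (a + j)) with
  | 0 => idc (1 + j)
  | S a' => c_seq (c_par (c_id1 k) (mvb a' j)) (c_par (c_sw k) (idc (a' + j)))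
  end.
Definition Tgen n m (g : gen k n m) : circ k (1 + n) (1 + m) :=
  match g in gen _ n m return circ k (1 + n) (1 + m) with
  | g_one => c_gen (g_copy k)
  | g => c_par (c_id1 k) (c_gen g)
  end.
Definition Top n m (g : gen k n m) : circ k (1 + m) (1 + n) :=
  match g in gen _ n m return circ k (1 + m) (1 + n) with
  | g_one => c_op (g_copy k)
  | g => c_par (c_id1 k) (c_op g)
  end.
Fixpoint T n m (c : circ k n m) : circ k (1 + n) (1 + m) :=
  match c in circ _ n m return circ k (1 + n) (1 + m) with
  | c_gen _ _ g => Tgen g
  | c_op _ _ g => Top g
  | c_id0 => c_id1 k
  | c_id1 => idc 2
  | c_sw => c_par (c_id1 k) (c_sw k)
  | c_seq _ _ _ c1 c2 => c_seq (T c1) (T c2)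
  | c_par n1 m1 n2 m2 c1 c2 =>
     c_seq (c_par (T c1) (idc n2))
       (c_seq (mv m1 n2) (c_seq (c_par (idc m1) (T c2)) (mvb m1 m2)))
  end.
Local Open Scope ring_scope.
Definition one : 'rV[kx k]_1 := const_mx 1.

Lemma rv1P (a b : 'rV[kx k]_1) : a = b <-> a ord0 ord0 = b ord0 ord0.
Proof.
split=> [->//|H]; apply/matrixP => i j; by rewrite !ord1.
Qed.

Lemma rv0P (a b : 'rV[kx k]_0) : a = b.
Proof. apply/matrixP => i []. by []. Qed.

Lemma row_mx0l n (x : 'rV[kx k]_0) (z : 'rV[kx k]_n) : row_mx x z = z :> 'rV_(0 + n).
Proof.
apply/matrixP => i j; rewrite -(row_mxEr x z i j); congr (row_mx _ _ _ _); exact: val_inj.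
Qed.

Lemma rowA1 n1 n2 (a : 'rV[kx k]_1) (x : 'rV_n1) (y : 'rV_n2) :
  row_mx a (row_mx x y) = row_mx (row_mx a x) y :> 'rV_(1 + (n1 + n2)).
Proof. have := @row_mxA _ _ _ _ _ a x y; rewrite /= castmx_id; exact. Qed.

Lemma sem_par_row n1 m1 n2 m2 (c1 : circ k n1 m1) (c2 : circ k n2 m2) u1 u2 w :
  sem (c_par c1 c2) (row_mx u1 u2) w <-> sem c1 u1 (lsubmx w) /\ sem c2 u2 (rsubmx w).
Proof. by rewrite /= row_mxKl row_mxKr. Qed.
Arguments sem_par_row {n1 m1 n2 m2 c1 c2 u1 u2 w}.

Lemma sem_idc n (u v : 'rV[kx k]_n) : sem (idc n) u v <-> u = v.
Proof.
elim: n u v => [|n IH] u v /=; first by [].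
split.
- case=> H1 /IH H2. by rewrite -[u](@hsubmxK _ 1 1 n) -[v](@hsubmxK _ 1 1 n) H1 H2.
- by move=> ->; split => //; apply/IH.
Qed.
Arguments sem_idc {n u v}.

Lemma rmx0 n (a : 'rV[kx k]_1) (x : 'rV_n) :
  (row_mx a x : 'rV_(S n)) ord0 ord0 = a ord0 ord0.
Proof. rewrite -(row_mxEl a x ord0 ord0); congr (row_mx _ _ _ _); exact: val_inj. Qed.

Lemma rmx1 (a b : 'rV[kx k]_1) :
  (row_mx a b : 'rV_2) ord0 ord_max = b ord0 ord0.
Proof. rewrite -(row_mxEr a b ord0 ord0); congr (row_mx _ _ _ _); exact: val_inj. Qed.

Lemma rv2P (w : 'rV[kx k]_2) (p q : 'rV_1) :
  w = row_mx p q <-> w ord0 ord0 = p ord0 ord0 /\ w ord0 ord_max = q ord0 ord0.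
Proof.
split; first by move=> ->; rewrite rmx0 rmx1.
case=> H1 H2; apply/matrixP => i j; rewrite (ord1 i).
case: j => [[|[|//]]] Hj.
- rewrite (_ : Ordinal Hj = ord0); last exact: val_inj. by rewrite H1 rmx0.
- rewrite (_ : Ordinal Hj = ord_max); last exact: val_inj. by rewrite H2 rmx1.
Qed.

Lemma sem_sw (a b : 'rV[kx k]_1) w :
  sem (c_sw k) (row_mx a b) w <-> w = row_mx b a.
Proof. by rewrite rv2P /= rmx0 rmx1. Qed.
Arguments sem_sw {a b w}.

Lemma sem_seq n m l (c1 : circ k n m) (c2 : circ k m l) u w :
  sem (c_seq c1 c2) u w <-> exists v, sem c1 u v /\ sem c2 v w.
Proof. by []. Qed.

Lemma sem_mv a j (p : 'rV[kx k]_1) (x : 'rV_a) (y : 'rV_j) w :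
  sem (mv a j) (row_mx p (row_mx x y)) w <-> w = row_mx x (row_mx p y).
Proof.
elim: a x w => [|a IH] x w.
  rewrite /mv sem_idc !row_mx0l; split=> ->//.
rewrite -[x](@hsubmxK _ 1 1 a); set x1 := @lsubmx _ 1 1 a x; set x2 := @rsubmx _ 1 1 a x.
have E : row_mx p (row_mx (row_mx x1 x2) y) = row_mx (row_mx p x1) (row_mx x2 y) :> 'rV_(2 + (a + j)).
  by rewrite -rowA1 -rowA1.
rewrite /mv -/mv sem_seq E; split.
- case=> z [Hp Hq].
  case/(@sem_par_row _ _ _ _ (c_sw k) (idc (a+j))): Hp => /sem_sw Hz1 /sem_idc Hz2.
  move: Hq; rewrite -(@hsubmxK _ 1 2 (a + j) z) Hz1 -Hz2 -rowA1.
  case/(@sem_par_row _ _ _ _ (c_id1 k) (mv a j)) => /= Hw1 /IH Hw2.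
  by rewrite -(@hsubmxK _ 1 1 (a + (1 + j)) w) -Hw1 Hw2 rowA1.
- move=> ->; exists (row_mx (row_mx x1 p) (row_mx x2 y)); split.
    apply/(@sem_par_row _ _ _ _ (c_sw k) (idc (a+j))); split; [apply/sem_sw; by rewrite row_mxKl | apply/sem_idc; by rewrite row_mxKr].
  rewrite -rowA1 -rowA1; apply/(@sem_par_row _ _ _ _ (c_id1 k) (mv a j)); rewrite row_mxKl row_mxKr; split => //; exact/IH.
Qed.

Lemma sem_mvb a j (p : 'rV[kx k]_1) (x : 'rV_a) (y : 'rV_j) w :
  sem (mvb a j) (row_mx x (row_mx p y)) w <-> w = row_mx p (row_mx x y).
Proof.
elim: a x w => [|a IH] x w.
  rewrite /mvb sem_idc !row_mx0l; split=> ->//.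
rewrite -[x](@hsubmxK _ 1 1 a); set x1 := @lsubmx _ 1 1 a x; set x2 := @rsubmx _ 1 1 a x.
have E : row_mx (row_mx x1 x2) (row_mx p y) = row_mx x1 (row_mx x2 (row_mx p y)) :> 'rV_(1 + (a + (1 + j))).
  by rewrite rowA1.
rewrite /mvb -/mvb sem_seq E; split.
- case=> z [Hp Hq].
  case/(@sem_par_row _ _ _ _ (c_id1 k) (mvb a j)): Hp => /= Hz1 /IH Hz2.
  move: Hq; rewrite -(@hsubmxK _ 1 1 (1 + (a + j)) z) -Hz1 Hz2 rowA1.
  case/(@sem_par_row _ _ _ _ (c_sw k) (idc (a+j))) => /sem_sw Hw1 /sem_idc Hw2.
  by rewrite -(@hsubmxK _ 1 2 (a + j) w) Hw1 -Hw2 -(rowA1 p x1) -(rowA1 x1 x2).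
- move=> ->; exists (row_mx x1 (row_mx p (row_mx x2 y))); split.
    apply/(@sem_par_row _ _ _ _ (c_id1 k) (mvb a j)); rewrite row_mxKl row_mxKr; split => //; exact/IH.
  rewrite (rowA1 x1 p) -(rowA1 x1 x2 y) (rowA1 p x1).
  apply/(@sem_par_row _ _ _ _ (c_sw k) (idc (a+j))); split; [apply/sem_sw; by rewrite row_mxKl | apply/sem_idc; by rewrite row_mxKr].
Qed.
Arguments sem_mv {a j p x y w}.
Arguments sem_mvb {a j p x y w}.

Lemma par_id1 n m (c : circ k n m) u w :
  sem (c_par (c_id1 k) c) (row_mx one u) w <-> exists v, w = row_mx one v /\ sem c u v.
Proof.
split.
- case/(@sem_par_row _ _ _ _ (c_id1 k) c) => /= H1 H2; exists (rsubmx w); split => //.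
  by rewrite H1 hsubmxK.
- case=> v [-> H]; apply/(@sem_par_row _ _ _ _ (c_id1 k) c); by rewrite row_mxKl row_mxKr.
Qed.

Lemma one00 : one ord0 ord0 = 1.
Proof. by rewrite mxE. Qed.

Lemma semT n m (c : circ k n m) (u : 'rV_n) (w : 'rV_(1 + m)) :
  sem (T c) (row_mx one u) w <-> exists v, w = row_mx one v /\ sem c u v.
Proof.
elim: c u w.
- move=> n0 m0 g; case: g => [||r||||] u w; try exact: (par_id1 (c_gen _)).
  rewrite /= rmx0 one00; split.
  + case=> H1 H2; exists one; split; last exact: one00.
    by apply/rv2P; rewrite H1 H2 one00.
  + by case=> v [-> Hv]; rewrite rmx0 rmx1 Hv one00.
- move=> n0 m0 g; case: g => [||r||||] u w; try exact: (par_id1 (c_op _)).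
  rewrite /= rmx0 rmx1 one00; split.
  + case=> H1 H2; exists (0 : 'rV_0); split; last by rewrite H2 -H1.
    by apply/rv1P; rewrite -H1 rmx0 one00.
  + by case=> v [-> Hv]; rewrite rmx0 Hv one00.
- move=> u w /=; split; first by move=> <-; exists u.
  by case=> v [-> <-].
- move=> u w; apply: iff_trans (@sem_idc 2 _ _) _; split; first by move=> <-; exists u.
  by case=> v [-> <-].
- move=> u w; exact: (par_id1 (c_sw k)).
- move=> n0 m0 l c1 IH1 c2 IH2 u w; rewrite sem_seq; split.
  + case=> z [/IH1 [v1 [-> H1]] /IH2 [v [-> H2]]]; exists v; split => //; by exists v1.
  + case=> v [-> [v1 [H1 H2]]]; exists (row_mx one v1); split; [apply/IH1; by exists v1 | apply/IH2; by exists v].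
- move=> n1 m1 n2 m2 c1 IH1 c2 IH2 u w.
  rewrite -[u](@hsubmxK _ 1 n1 n2); set u1 := lsubmx u; set u2 := rsubmx u.
  have E : row_mx one (row_mx u1 u2) = row_mx (row_mx one u1) u2 :> 'rV_(1 + (n1 + n2)) by rewrite rowA1.
  rewrite /T -/T sem_seq E; split.
  + case=> z [HP [z' [HM [z'' [HQ HB]]]]].
    case/(@sem_par_row _ _ _ _ (T c1) (idc n2)): HP => /IH1 [v1 [Ez1 H1]] /sem_idc Ez2.
    move: HM; rewrite -(@hsubmxK _ 1 (1 + m1) n2 z) Ez1 -Ez2 -rowA1 => /sem_mv Ez'.
    rewrite Ez' in HQ.
    case/(@sem_par_row _ _ _ _ (idc m1) (T c2)): HQ => /sem_idc Ez''1 /IH2 [v2 [Ez''2 H2]].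
    move: HB; rewrite -(@hsubmxK _ 1 m1 (1 + m2) z'') -Ez''1 Ez''2 => /sem_mvb ->.
    exists (row_mx v1 v2); split => //.
    apply/(@sem_par_row _ _ _ _ c1 c2); by rewrite row_mxKl row_mxKr.
  + case=> v [-> Hv].
    case/(@sem_par_row _ _ _ _ c1 c2): Hv => H1 H2.
    set v1 := lsubmx v in H1; set v2 := rsubmx v in H2.
    exists (row_mx (row_mx one v1) u2); split.
      apply/(@sem_par_row _ _ _ _ (T c1) (idc n2)); rewrite row_mxKl row_mxKr; split; last exact/sem_idc.
      by apply/IH1; exists v1.
    exists (row_mx v1 (row_mx one u2)); split; first by rewrite -rowA1; apply/sem_mv.
    exists (row_mx v1 (row_mx one v2)); split.
      apply/(@sem_par_row _ _ _ _ (idc m1) (T c2)); rewrite row_mxKl row_mxKr; split; first exact/sem_idc.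
      by apply/IH2; exists v2.
    by apply/sem_mvb; rewrite /v1 /v2 hsubmxK.
Qed.
End S.

Lemma cnt_idc (k : fieldType) n : count_one (idc k n) = 0%N /\ count_one_op (idc k n) = 0%N.
Proof. by elim: n => //= n [-> ->]. Qed.

Lemma cnt_mv (k : fieldType) a j : (count_one (mv k a j) = 0 /\ count_one_op (mv k a j) = 0)%N.
Proof.
elim: a => [|a [IH1 IH2]] /=; first exact: cnt_idc.
by have [-> ->] := cnt_idc k (a + j); rewrite IH1 IH2.
Qed.

Lemma cnt_mvb (k : fieldType) a j : (count_one (mvb k a j) = 0 /\ count_one_op (mvb k a j) = 0)%N.
Proof.
elim: a => [|a [IH1 IH2]] /=; first exact: cnt_idc.
by have [-> ->] := cnt_idc k (a + j); rewrite IH1 IH2.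
Qed.

Lemma cnt_T (k : fieldType) n m (c : circ k n m) :
  (count_one (T c) = 0 /\ count_one_op (T c) = 0)%N.
Proof.
elim: c => //.
- by move=> n0 m0 g; case: g.
- by move=> n0 m0 g; case: g.
- by move=> n0 m0 l c1 [A1 A2] c2 [B1 B2] /=; rewrite A1 A2 B1 B2.
- move=> n1 m1 n2 m2 c1 [A1 A2] c2 [B1 B2] /=.
  have [-> ->] := cnt_idc k n2; have [-> ->] := cnt_idc k m1.
  have [-> ->] := cnt_mv k m1 n2; have [-> ->] := cnt_mvb k m1 m2.
  by rewrite A1 A2 B1 B2.
Qed.

Lemma rsub0 (R : Type) n (u : 'M[R]_(1, 0 + n)) : (rsubmx u : 'M_(1, n)) = u.
Proof.
apply/matrixP => i j; rewrite mxE; congr (u _ _); exact: val_inj.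
Qed.

Theorem proposition12 (k : fieldType) (n m : nat) (c : circ k n m) :
  exists d : circ k n m,
    count_one d = 1%N /\ count_one_op d = 0%N /\
    (forall u v, sem c u v <-> sem d u v).
Proof.
exists (c_seq (c_par (c_gen (g_one k)) (idc k n))
          (c_seq (T c) (c_par (c_gen (g_discard k)) (idc k m)))).
have [I1 I2] := cnt_idc k n; have [J1 J2] := cnt_idc k m; have [T1 T2] := cnt_T c.
split; first by rewrite /= I1 J1 T1.
split; first by rewrite /= I2 J2 T2.
move=> u v; split.
- move=> Hc; exists (row_mx (one k) u); split.
    split; first by rewrite row_mxKl /= one00.
    by apply/sem_idc; rewrite row_mxKr rsub0.
  exists (row_mx (one k) v); split; first by apply/semT; exists v.
  by split => //; apply/sem_idc; rewrite row_mxKr rsub0.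
- case=> z [[Hz1 /sem_idc Hz2] [w [Hw [_ /sem_idc Hd]]]].
  rewrite rsub0 in Hz2.
  have Ez : z = row_mx (one k) u.
    rewrite -(@hsubmxK _ 1 1 n z) -Hz2; congr row_mx; apply/rv1P; by rewrite Hz1 one00.
  rewrite Ez in Hw; case/semT: Hw => v' [Ew Hc].
  by rewrite Ew row_mxKr rsub0 in Hd; rewrite -Hd.
Qed.
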